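(* For $\theta\in(0,\pi/4]$, let $|\psi_\theta\rangle=\cos\theta|00\rangle+\sin\theta|11\rangle$ be a two-qubit pure state on $AB$ and $\psi_\theta=|\psi_\theta\rangle\langle\psi_\theta|$. Then its optimal unilocal 2-broadcasting fidelity on $A$ is \[ f_2(\psi_\theta)=\begin{cases}\cos^2\theta+\dfrac{\sin^2\theta}{\sqrt2}, & \theta\in(0,\arctan(2^{-1/4})],\\[2mm] \Big(\tfrac32(\cos^4\theta+\sin^4\theta)\Big)^{1/2}, & \theta\in(\arctan(2^{-1/4}),\pi/4].\end{cases} \]
   Context: Fidelity: $F(\rho,\sigma)=\mathrm{tr}\sqrt{\sqrt{\rho}\sigma\sqrt{\rho}}$. Let $A_1,A_2$ be copies of the qubit system $A$. The optimal unilocal $2$-broadcasting fidelity of a state $\rho_{AB}$ on $A$ is \[f_2(\rho_{AB})=\sup\Big\{\frac12\sum_{j=1}^2F\big(\rho_{AB},\mathrm{tr}_{\backslash A_jB}(\Lambda_{A\to A_1A_2}\otimes\mathrm{id}_B)(\rho_{AB})\big):\ \Lambda \text{ a quantum channel}\Big\},\] where $\mathrm{tr}_{\backslash A_jB}$ traces out all systems other than $A_j$ and $B$, and $A_j$ is identified with $A$. *)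

(* Defs.v *)
From mathcomp Require Import all_boot all_algebra.
From mathcomp Require Import all_classical all_reals all_analysis.
From mathcomp Require Import complex.

Set Implicit Arguments.
Unset Strict Implicit.
Unset Printing Implicit Defensive.

Import GRing.Theory Num.Theory.
Local Open Scope ring_scope.

Section QuantumDefs.
Variable R : realType.
Local Notation C := R[i].

Definition adjmx m n (A : 'M[C]_(m, n)) : 'M[C]_(n, m) := (map_mx (@conjc R) A)^T.

(* positive semidefinite: <v|A|v> >= 0 for all v (in the order of C = R[i],
   0 <= z means z is real and nonnegative) *)
Definition psd n (A : 'M[C]_n) : Prop :=
  forall v : 'cV[C]_n, 0 <= (adjmx v *m A *m v) 0 0.

Definition sqrtm n (A : 'M[C]_n) : 'M[C]_n :=
  xget 0 [set B : 'M[C]_n | psd B /\ B *m B = A].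

(* Uhlmann fidelity F(rho,sigma) = tr sqrt(sqrt rho sigma sqrt rho)
   (a nonnegative real number for PSD arguments; we take its real part) *)
Definition fidelity n (rho sigma : 'M[C]_n) : R :=
  complex.Re (\tr (sqrtm (sqrtm rho *m sigma *m sqrtm rho))).

(* decomposition of a composite index of 'I_(m*n) = 'I_m (x) 'I_n,
   inverse of mxvec_index *)
Definition idx_pair m n (k : 'I_(m * n)) : 'I_m * 'I_n :=
  enum_val (cast_ord (esym (@mxvec_cast m n)) k).

(* block (b,d) of an operator X on a composite system S (x) K *)
Definition blk m k (X : 'M[C]_(m * k)) (b d : 'I_k) : 'M[C]_m :=
  \matrix_(a, c) X (mxvec_index a b) (mxvec_index c d).

(* (f (x) id_K) X, for f a map on operators of the first factor *)
Definition ext m n k (f : 'M[C]_m -> 'M[C]_n) (X : 'M[C]_(m * k)) : 'M[C]_(n * k) :=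
  \matrix_(i, j) f (blk X (idx_pair i).2 (idx_pair j).2) (idx_pair i).1 (idx_pair j).1.

Definition channel m n (f : 'M[C]_m -> 'M[C]_n) : Prop :=
  [/\ (forall (a : C) (X Y : 'M[C]_m), f (a *: X + Y) = a *: f X + f Y),
      (forall (k : nat) (X : 'M[C]_(m * k)), psd X -> psd (ext f X))
    & (forall X : 'M[C]_m, \tr (f X) = \tr X)].

(* On a system (A1 (x) A2) (x) B: keep A1 B (trace out A2) *)
Definition keep1 m1 m2 k (Y : 'M[C]_((m1 * m2) * k)) : 'M[C]_(m1 * k) :=
  \matrix_(i, j) \sum_(a2 < m2)
     Y (mxvec_index (mxvec_index (idx_pair i).1 a2) (idx_pair i).2)
       (mxvec_index (mxvec_index (idx_pair j).1 a2) (idx_pair j).2).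

(* On a system (A1 (x) A2) (x) B: keep A2 B (trace out A1) *)
Definition keep2 m1 m2 k (Y : 'M[C]_((m1 * m2) * k)) : 'M[C]_(m2 * k) :=
  \matrix_(i, j) \sum_(a1 < m1)
     Y (mxvec_index (mxvec_index a1 (idx_pair i).1) (idx_pair i).2)
       (mxvec_index (mxvec_index a1 (idx_pair j).1) (idx_pair j).2).

Definition f2 dA dB (rho : 'M[C]_(dA * dB)) : R :=
  sup [set x : R | exists L : 'M[C]_dA -> 'M[C]_(dA * dA),
         channel L /\
         x = (fidelity rho (keep1 (ext L rho)) + fidelity rho (keep2 (ext L rho))) / 2].

(* |psi_theta> = cos th |00> + sin th |11>, basis |ab> = mxvec_index a b *)
Definition psi_ket (th : R) : 'cV[C]_(2 * 2) :=
  \col_i (if i == mxvec_index (ord0 : 'I_2) (ord0 : 'I_2) then ((cos th)%:C)%C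
          else if i == mxvec_index (ord_max : 'I_2) (ord_max : 'I_2) then ((sin th)%:C)%C
          else 0).

Definition psi_state (th : R) : 'M[C]_(2 * 2) := psi_ket th *m adjmx (psi_ket th).

End QuantumDefs.

(* Main.v *)
Require Import Defs.
From mathcomp Require Import all_boot all_algebra.
From mathcomp Require Import all_classical all_reals all_analysis.
From mathcomp Require Import complex.
From mathcomp Require Import all_order.
From mathcomp Require Import ring lra.
Set Implicit Arguments.
Unset Strict Implicit.
Unset Printing Implicit Defensive.
Import Order.TTheory GRing.Theory Num.Theory.
Local Open Scope ring_scope.


Section A.
Variable R : realType.
Local Notation C := R[i].

Lemma adjmxE m n (A : 'M[C]_(m, n)) i j : adjmx A i j = conjc (A j i).
Proof. by rewrite /adjmx !mxE. Qed.

Lemma adjmxK m n (A : 'M[C]_(m, n)) : adjmx (adjmx A) = A.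
Proof. by apply/matrixP=> i j; rewrite !adjmxE conjcK. Qed.

Lemma adjmxM m n p (A : 'M[C]_(m, n)) (B : 'M[C]_(n, p)) :
  adjmx (A *m B) = adjmx B *m adjmx A.
Proof. by rewrite /adjmx map_mxM trmx_mul. Qed.

Lemma adjmxD m n (A B : 'M[C]_(m, n)) : adjmx (A + B) = adjmx A + adjmx B.
Proof. by rewrite /adjmx map_mxD linearD. Qed.

Lemma adjmxZ m n a (A : 'M[C]_(m, n)) : adjmx (a *: A) = conjc a *: adjmx A.
Proof. by rewrite /adjmx map_mxZ linearZ. Qed.

Lemma adjmx_delta m n i j : adjmx (delta_mx i j : 'M[C]_(m, n)) = delta_mx j i.
Proof. by rewrite /adjmx map_delta_mx trmx_delta. Qed.

Lemma adjmx_sum m n I (r : seq I) (F : I -> 'M[C]_(m, n)) :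
  adjmx (\sum_(k <- r) F k) = \sum_(k <- r) adjmx (F k).
Proof.
elim: r => [|x r IH]; first by rewrite !big_nil /adjmx map_mx0 trmx0.
by rewrite !big_cons adjmxD IH.
Qed.

Definition sform n (u : 'cV[C]_n) (B : 'M[C]_n) (v : 'cV[C]_n) : C :=
  (adjmx u *m B *m v) 0 0.

Lemma sformDl n u1 u2 B (v : 'cV[C]_n) : sform (u1 + u2) B v = sform u1 B v + sform u2 B v.
Proof. by rewrite /sform adjmxD !mulmxDl mxE. Qed.

Lemma sformDr n u B (v1 v2 : 'cV[C]_n) : sform u B (v1 + v2) = sform u B v1 + sform u B v2.
Proof. by rewrite /sform mulmxDr mxE. Qed.

Lemma sformZl n a u B (v : 'cV[C]_n) : sform (a *: u) B v = conjc a * sform u B v.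
Proof. by rewrite /sform adjmxZ -!scalemxAl mxE. Qed.

Lemma sformZr n a u B (v : 'cV[C]_n) : sform u B (a *: v) = a * sform u B v.
Proof. by rewrite /sform -scalemxAr mxE. Qed.

Lemma sform_delta n (B : 'M[C]_n) p q : sform (delta_mx p 0) B (delta_mx q 0) = B p q.
Proof. by rewrite /sform adjmx_delta -rowE -colE !mxE. Qed.

Lemma sformB_sum n (u : 'cV[C]_n) I (r : seq I) (F : I -> 'M[C]_n) v :
  sform u (\sum_(k <- r) F k) v = \sum_(k <- r) sform u (F k) v.
Proof.
elim: r => [|x r IH]; first by rewrite !big_nil /sform mulmx0 mul0mx mxE.
by rewrite !big_cons /sform mulmxDr mulmxDl mxE -IH.
Qed.

End A.


Section B.
Variable R : realType.
Local Notation C := R[i].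

Lemma nn_adj m (z : 'cV[C]_m) : 0 <= (adjmx z *m z) 0 0.
Proof.
rewrite mxE; apply: sumr_ge0 => i _; rewrite adjmxE mulrC; exact: mulcJ_ge0.
Qed.

Lemma psd_outer m (k : 'cV[C]_m) : psd (k *m adjmx k).
Proof.
move=> v; have -> : adjmx v *m (k *m adjmx k) *m v = adjmx (adjmx k *m v) *m (adjmx k *m v).
  by rewrite adjmxM adjmxK !mulmxA.
exact: nn_adj.
Qed.

Lemma psd_conj m n (M : 'M[C]_(n, m)) (X : 'M[C]_m) : psd X -> psd (M *m X *m adjmx M).
Proof.
move=> hX v; have -> : adjmx v *m (M *m X *m adjmx M) *m v
   = adjmx (adjmx M *m v) *m X *m (adjmx M *m v).
  by rewrite adjmxM adjmxK !mulmxA.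
exact: hX.
Qed.

Lemma psd_sum n I (r : seq I) (F : I -> 'M[C]_n) :
  (forall k, psd (F k)) -> psd (\sum_(k <- r) F k).
Proof.
move=> hF v; have := sformB_sum v r F v; rewrite /sform => ->.
by apply: sumr_ge0 => k _; apply: hF.
Qed.

Lemma ge0_conj (x : C) : 0 <= x -> conjc x = x.
Proof.
move=> /ger0_Im; case: x => a b /= ->.
by rewrite /conjc oppr0.
Qed.

Lemma psd_entry n (B : 'M[C]_n) p q : psd B -> B q p = conjc (B p q).
Proof.
move=> hB.
pose e (i : 'I_n) : 'cV[C]_n := delta_mx i 0.
have hg : forall a : C, sform (e p + a *: e q) B (e p + a *: e q)
   = B p p + a * B p q + conjc a * B q p + conjc a * a * B q q.
  move=> a; rewrite !sformDl !sformDr !sformZl !sformZr !sform_delta; ring.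
have h1 := ger0_Im (hB (e p + 1 *: e q)).
have h2 := ger0_Im (hB (e p + 'i%C *: e q)).
have h3 := ger0_Im (hB (e p)). have h4 := ger0_Im (hB (e q)).
move: h1 h2 h3 h4; rewrite -![(adjmx _ *m B *m _) 0 0]/(sform _ B _) !hg !sform_delta.
case: (B p p) => a1 b1; case: (B p q) => a2 b2; case: (B q p) => a3 b3; case: (B q q) => a4 b4.
rewrite /conjc /=. simpc. move=> h1 h2 h3 h4.
apply/eqP; rewrite eq_complex /=; apply/andP; split; apply/eqP; lra.
Qed.

Lemma psd_herm n (B : 'M[C]_n) : psd B -> adjmx B = B.
Proof. by move=> hB; apply/matrixP => i j; rewrite adjmxE -psd_entry. Qed.

Lemma adj0 m n (W : 'M[C]_(m, n)) : adjmx W *m W = 0 -> W = 0.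
Proof.
move=> h; apply/matrixP => i j.
have : (adjmx W *m W) j j = 0 by rewrite h mxE.
rewrite mxE => /psumr_eq0P H.
have := H (fun k _ => ltac:(rewrite adjmxE mulrC; exact: mulcJ_ge0)) i isT.
rewrite adjmxE mxE.
by move=> /eqP; rewrite mulf_eq0 conjc_eq0 orbb => /eqP.
Qed.

End B.


Section Cc.
Variable R : realType.
Local Notation C := R[i].

Lemma adjmxN m n (A : 'M[C]_(m, n)) : adjmx (- A) = - adjmx A.
Proof. by rewrite /adjmx map_mxN linearN. Qed.

Lemma adjmx1 n : adjmx (1%:M : 'M[C]_n) = 1%:M.
Proof. by apply/matrixP=> i j; rewrite adjmxE !mxE eq_sym; case: (_ == _); rewrite ?conjc1 ?conjc0. Qed.

Lemma ge0_re (z : C) : 0 <= z -> z = ((complex.Re z)%:C)%C /\ 0 <= complex.Re z.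
Proof.
case: z => a b h; have /= hb := ger0_Im h; subst b.
by split => //; move: h; rewrite -[(a +i* 0)%C]/(a%:C)%C ler0c.
Qed.

Variable n : nat.
Variable k : 'cV[C]_n.
Hypothesis hk : adjmx k *m k = 1%:M.
Let P := k *m adjmx k.

Lemma PP : P *m P = P.
Proof. by rewrite /P mulmxA -(mulmxA k) hk mulmx1. Qed.

Lemma adjP : adjmx P = P.
Proof. by rewrite /P adjmxM adjmxK. Qed.

Lemma trP : \tr P = 1.
Proof. by rewrite /P mxtrace_mulC hk mxtrace1. Qed.

Lemma PXP (X : 'M[C]_n) : P *m X *m P = (adjmx k *m X *m k) 0 0 *: P.
Proof.
rewrite /P; have -> : k *m adjmx k *m X *m (k *m adjmx k) = k *m (adjmx k *m X *m k) *m adjmx k by rewrite !mulmxA.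
by rewrite {1}(mx11_scalar (adjmx k *m X *m k)) mul_mx_scalar -scalemxAl.
Qed.

Lemma sqrt_unique (x : R) (Bm : 'M[C]_n) : 0 <= x -> psd Bm ->
  Bm *m Bm = (x%:C)%C *: P -> Bm = ((Num.sqrt x)%:C)%C *: P.
Proof.
move=> x0 hB hBB.
have hH := psd_herm hB.
have W0 : Bm *m (1%:M - P) = 0.
  apply: adj0.
  rewrite adjmxM adjmxD adjmx1 adjmxN adjP hH mulmxA -(mulmxA _ Bm Bm) hBB.
  by rewrite -scalemxAr mulmxBl mul1mx PP subrr scaler0 mul0mx.
have hBP : Bm = Bm *m P.
  by move/eqP: W0; rewrite mulmxBr mulmx1 subr_eq0 => /eqP.
have hPB : Bm = P *m Bm.
  by rewrite -{1}hH {1}hBP adjmxM adjP hH.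
have hl : Bm = (adjmx k *m Bm *m k) 0 0 *: P.
  by rewrite -PXP -hPB -hBP.
have l0 : 0 <= (adjmx k *m Bm *m k) 0 0 by apply: hB.
move: hBB; rewrite hl; move: l0; set l := (adjmx k *m Bm *m k) 0 0 => l0.
rewrite -scalemxAl -scalemxAr PP scalerA => hBB.
have := congr1 mxtrace hBB; rewrite !mxtraceZ trP !mulr1.
have [-> a0] := ge0_re l0; rewrite -rmorphM => /complexI <-.
by rewrite -expr2 sqrtr_sqr ger0_norm.
Qed.

Lemma sqrtm_rank1 (x : R) : 0 <= x ->
  sqrtm ((x%:C)%C *: P) = ((Num.sqrt x)%:C)%C *: P.
Proof.
move=> x0; rewrite /sqrtm; apply: xget_unique.
  split.
    move=> v; rewrite -scalemxAr -scalemxAl mxE; apply: mulr_ge0.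
      by rewrite ler0c sqrtr_ge0.
    exact: psd_outer.
  rewrite -scalemxAl -scalemxAr PP scalerA -rmorphM -expr2 sqr_sqrtr //.
by move=> y [hy1 hy2]; apply: sqrt_unique.
Qed.

Lemma sqrtmP : sqrtm P = P.
Proof.
have := (@sqrtm_rank1 1 ler01); rewrite sqrtr1 scale1r; exact.
Qed.

Lemma fid_rank1 (sig : 'M[C]_n) : 0 <= (adjmx k *m sig *m k) 0 0 ->
  fidelity P sig = Num.sqrt (complex.Re ((adjmx k *m sig *m k) 0 0)).
Proof.
move=> h; rewrite /fidelity sqrtmP PXP.
have [e r0] := ge0_re h; rewrite {1}e sqrtm_rank1 // mxtraceZ trP mulr1.
by [].
Qed.

End Cc.


Lemma idx_mxvec m n (a : 'I_m) (b : 'I_n) : idx_pair (mxvec_index a b) = (a, b).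
Proof. by rewrite /idx_pair /mxvec_index cast_ordK enum_rankK. Qed.

Section D.
Variable R : realType.
Local Notation C := R[i].

Lemma sum_pair m n (F : 'I_(m * n) -> C) :
  \sum_(k < m * n) F k = \sum_(a < m) \sum_(b < n) F (mxvec_index a b).
Proof.
rewrite pair_bigA /= (reindex (uncurry (@mxvec_index m n))) /=.
  by apply: eq_bigr => -[a b].
by case: (curry_mxvec_bij m n) => g h1 h2; exists g => x _; [apply: h1|apply: h2].
Qed.

Lemma sum_delta k (b : 'I_k) (F : 'I_k -> C) :
  \sum_(b1 < k) (b == b1)%:R * F b1 = F b.
Proof.
rewrite (bigD1 b) //= eqxx mul1r big1 ?addr0 // => b1 /negbTE.
by rewrite eq_sym => ->; rewrite mul0r.
Qed.

Definition tens m n k (A : 'M[C]_(n, m)) : 'M[C]_(n * k, m * k) :=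
  \matrix_(I, J) (A (idx_pair I).1 (idx_pair J).1 * ((idx_pair I).2 == (idx_pair J).2)%:R).

Lemma ext_conj m n k (A : 'M[C]_(n, m)) (Y : 'M[C]_(m * k)) :
  ext (fun X => A *m X *m adjmx A) Y = tens k A *m Y *m adjmx (tens k A).
Proof.
apply/matrixP => I J.
case/mxvec_indexP: I => i b; case/mxvec_indexP: J => c d.
rewrite /ext !mxE !idx_mxvec /= sum_pair.
under eq_bigr => a' _ do rewrite mxE.
under [RHS]eq_bigr => a' _ do (under eq_bigr => b' _ do rewrite !mxE sum_pair).
apply: eq_bigr => a' _.
rewrite [RHS](bigD1 d) //= [X in _ + X]big1 ?addr0; last first.
  by move=> b' hb; rewrite !idx_mxvec /= eq_sym (negbTE hb) mulr0 conjc0 mulr0.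
rewrite !idx_mxvec /= eqxx mulr1 adjmxE; congr (_ * _).
apply: eq_bigr => a _.
rewrite [RHS](bigD1 b) //= [X in _ + X]big1 ?addr0; last first.
  by move=> b' hb; rewrite /tens mxE !idx_mxvec /= eq_sym (negbTE hb) mulr0 mul0r.
by rewrite /tens /blk !mxE !idx_mxvec /= eqxx mulr1.
Qed.

Lemma ext_sum m n k r (f : 'I_r -> 'M[C]_m -> 'M[C]_n) (Y : 'M[C]_(m * k)) :
  ext (fun X => \sum_(j < r) f j X) Y = \sum_(j < r) ext (f j) Y.
Proof. by apply/matrixP => I J; rewrite summxE mxE summxE; apply: eq_bigr => j _; rewrite mxE. Qed.

Definition kraus m n r (K : 'I_r -> 'M[C]_(n, m)) (X : 'M[C]_m) : 'M[C]_n :=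
  \sum_(j < r) K j *m X *m adjmx (K j).

Lemma kraus_channel m n r (K : 'I_r -> 'M[C]_(n, m)) :
  \sum_(j < r) adjmx (K j) *m K j = 1%:M -> channel (kraus K).
Proof.
move=> hK; split.
- move=> a X Y; rewrite /kraus scaler_sumr -big_split /=; apply: eq_bigr => j _.
  by rewrite mulmxDr mulmxDl -scalemxAr -scalemxAl.
- move=> k X hX; rewrite /kraus ext_sum.
  under eq_bigr => j _ do rewrite ext_conj.
  by apply: psd_sum => j; apply: psd_conj.
- move=> X; rewrite /kraus linear_sum /=.
  under eq_bigr => j _ do rewrite mxtrace_mulC mulmxA.
  by rewrite -linear_sum /= -mulmx_suml hK mul1mx.
Qed.

End D.


Notation o0 := (ord0 : 'I_2).
Notation o1 := (ord_max : 'I_2).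

Lemma I2_cases (a : 'I_2) : a = o0 \/ a = o1.
Proof. by case: a => [[|[|]]] // h; [left|right]; apply: val_inj. Qed.

Lemma mxvec_eq m n (a a' : 'I_m) (b b' : 'I_n) :
  (mxvec_index a b == mxvec_index a' b') = (a == a') && (b == b').
Proof.
apply/eqP/andP => [h|[/eqP -> /eqP ->]] //.
by have := congr1 (@idx_pair m n) h; rewrite !idx_mxvec => -[-> ->].
Qed.

Section E.
Variable R : realType.
Local Notation C := R[i].

Lemma sum2 (F : 'I_2 -> C) : \sum_(i < 2) F i = F o0 + F o1.
Proof. by rewrite big_ord_recr big_ord1 /=; congr (F _ + F _); apply: val_inj. Qed.

Definition ix (a1 a2 b : 'I_2) : 'I_(2 * 2 * 2) := mxvec_index (mxvec_index a1 a2) b.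
Definition e3 (a1 a2 b : 'I_2) : 'cV[C]_(2 * 2 * 2) := delta_mx (ix a1 a2 b) 0.
Definition e2 (a b : 'I_2) : 'cV[C]_(2 * 2) := delta_mx (mxvec_index a b) 0.

Variable th : R.
Local Notation c := (cos th).
Local Notation s := (sin th).

Lemma psiE : psi_ket th = (c%:C)%C *: e2 o0 o0 + (s%:C)%C *: e2 o1 o1.
Proof.
apply/matrixP => i j; rewrite !ord1; case/mxvec_indexP: i => a b.
rewrite !mxE !mxvec_eq.
by case: (I2_cases a) => ->; case: (I2_cases b) => -> /=; rewrite ?mulr1 ?mulr0 ?addr0 ?add0r.
Qed.

Lemma psi_norm : adjmx (psi_ket th) *m psi_ket th = 1%:M.
Proof.
apply/matrixP => i j; rewrite !ord1.
have -> : (adjmx (psi_ket th) *m psi_ket th) 0 0 = sform (psi_ket th) 1%:M (psi_ket th) by rewrite /sform mulmx1.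
rewrite psiE !sformDl !sformDr !sformZl !sformZr !conjc_real /e2 !sform_delta !mxE !mxvec_eq /=.
by rewrite !mulr1 !mulr0 !addr0 !add0r -!rmorphM -rmorphD -!expr2 cos2Dsin2.
Qed.


Lemma psi_entry a b : psi_ket th (mxvec_index a b) 0 =
  if (a == o0) && (b == o0) then (c%:C)%C else if (a == o1) && (b == o1) then (s%:C)%C else 0.
Proof. by rewrite mxE !mxvec_eq. Qed.

Lemma psi00 : psi_ket th (mxvec_index o0 o0) 0 = (c%:C)%C. Proof. by rewrite psi_entry. Qed.
Lemma psi11 : psi_ket th (mxvec_index o1 o1) 0 = (s%:C)%C. Proof. by rewrite psi_entry. Qed.
Lemma psi01 : psi_ket th (mxvec_index o0 o1) 0 = 0. Proof. by rewrite psi_entry. Qed.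
Lemma psi10 : psi_ket th (mxvec_index o1 o0) 0 = 0. Proof. by rewrite psi_entry. Qed.

Definition uvec (a2 : 'I_2) : 'cV[C]_(2*2*2) := (c%:C)%C *: e3 o0 a2 o0 + (s%:C)%C *: e3 o1 a2 o1.
Definition vvec (a1 : 'I_2) : 'cV[C]_(2*2*2) := (c%:C)%C *: e3 a1 o0 o0 + (s%:C)%C *: e3 a1 o1 o1.

Lemma z1E (Om : 'M[C]_(2*2*2)) :
  sform (psi_ket th) (keep1 Om) (psi_ket th) = sform (uvec o0) Om (uvec o0) + sform (uvec o1) Om (uvec o1).
Proof.
rewrite /uvec /e3 /ix psiE !sformDl !sformDr !sformZl !sformZr !conjc_real /e2 !sform_delta.
rewrite /keep1 !mxE !idx_mxvec /= !sum2.
ring.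
Qed.

Lemma z2E (Om : 'M[C]_(2*2*2)) :
  sform (psi_ket th) (keep2 Om) (psi_ket th) = sform (vvec o0) Om (vvec o0) + sform (vvec o1) Om (vvec o1).
Proof.
rewrite /vvec /e3 /ix psiE !sformDl !sformDr !sformZl !sformZr !conjc_real /e2 !sform_delta.
rewrite /keep2 !mxE !idx_mxvec /= !sum2.
ring.
Qed.


Lemma Tconstr (L : 'M[C]_2 -> 'M[C]_(2 * 2)) (b : 'I_2) : channel L ->
  let Om := ext L (psi_state th) in
  Om (ix o0 o0 b) (ix o0 o0 b) + Om (ix o0 o1 b) (ix o0 o1 b) + Om (ix o1 o0 b) (ix o1 o0 b)
   + Om (ix o1 o1 b) (ix o1 o1 b) = \tr (blk (psi_state th) b b).
Proof.
case=> _ _ TP /=; rewrite -TP /mxtrace sum_pair !sum2 /ext /ix !mxE !idx_mxvec /=.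
by rewrite !addrA.
Qed.

Lemma psis_entry p q : psi_state th p q = psi_ket th p 0 * conjc (psi_ket th q 0).
Proof. by rewrite /psi_state mxE big_ord1 adjmxE. Qed.

Lemma tr_blk0 : \tr (blk (psi_state th) o0 o0) = (c%:C)%C * (c%:C)%C.
Proof. by rewrite /mxtrace sum2 /blk !mxE !big_ord1 !adjmxE psi00 psi10 conjc_real conjc0 mulr0 addr0. Qed.

Lemma tr_blk1 : \tr (blk (psi_state th) o1 o1) = (s%:C)%C * (s%:C)%C.
Proof. rewrite /mxtrace sum2 /blk !mxE !big_ord1 !adjmxE psi11 psi01. by rewrite mul0r add0r conjc_real. Qed.

Lemma Om_psd (L : 'M[C]_2 -> 'M[C]_(2 * 2)) : channel L -> psd (ext L (psi_state th)).
Proof. by case=> _ CP _; apply: CP; apply: psd_outer. Qed.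

End E.


Section F0.
Variable R : realType.
Local Notation C := R[i].

Definition vecl n (l : seq (R * 'I_n)) : 'cV[C]_n :=
  \sum_(x <- l) ((x.1)%:C)%C *: delta_mx x.2 0.

Lemma sform0l n B (v : 'cV[C]_n) : sform 0 B v = 0.
Proof. by rewrite /sform /adjmx map_mx0 trmx0 !mul0mx mxE. Qed.
Lemma sform0r n B (v : 'cV[C]_n) : sform v B 0 = 0.
Proof. by rewrite /sform mulmx0 mxE. Qed.

Lemma sform_vecl n (l : seq (R * 'I_n)) B :
  sform (vecl l) B (vecl l) = \sum_(x <- l) \sum_(y <- l) ((x.1 * y.1)%:C)%C * B x.2 y.2.
Proof.
rewrite /vecl.
have hl : forall (l1 : seq (R * 'I_n)) v, sform (\sum_(x <- l1) ((x.1)%:C)%C *: delta_mx x.2 0) B v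
   = \sum_(x <- l1) conjc ((x.1)%:C)%C * sform (delta_mx x.2 0) B v.
  move=> l1 v; elim: l1 => [|x l1 IH]; first by rewrite !big_nil sform0l.
  by rewrite !big_cons sformDl sformZl IH.
have hr : forall (l1 : seq (R * 'I_n)) u, sform u B (\sum_(x <- l1) ((x.1)%:C)%C *: delta_mx x.2 0)
   = \sum_(x <- l1) ((x.1)%:C)%C * sform u B (delta_mx x.2 0).
  move=> l1 u; elim: l1 => [|x l1 IH]; first by rewrite !big_nil sform0r.
  by rewrite !big_cons sformDr sformZr IH.
rewrite hl; apply: eq_bigr => x _; rewrite hr mulr_sumr; apply: eq_bigr => y _.
by rewrite sform_delta conjc_real mulrA rmorphM.
Qed.

End F0.

Section F.
Variable R : realType.
Local Notation C := R[i].
Local Notation "x %:CC" := ((x : R)%:C)%C (at level 2, format "x %:CC").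
Variable th : R.
Local Notation c := (cos th).
Local Notation s := (sin th).
Variable L : 'M[C]_2 -> 'M[C]_(2 * 2).
Hypothesis hL : channel L.
Let Om := ext L (psi_state th).
Local Notation Q l := (sform (vecl l) Om (vecl l)).
Let z1 := sform (psi_ket th) (keep1 Om) (psi_ket th).
Let z2 := sform (psi_ket th) (keep2 Om) (psi_ket th).

Lemma uvecE a : @uvec R th a = vecl [:: (c, ix o0 a o0); (s, ix o1 a o1)].
Proof. by rewrite /vecl !big_cons big_nil addr0. Qed.
Lemma vvecE a : @vvec R th a = vecl [:: (c, ix a o0 o0); (s, ix a o1 o1)].
Proof. by rewrite /vecl !big_cons big_nil addr0. Qed.

Lemma Qge0 l : 0 <= Q l.
Proof. exact: (Om_psd th hL (vecl l)). Qed.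

Lemma hT0 : Om (ix o0 o0 o0) (ix o0 o0 o0) + Om (ix o0 o1 o0) (ix o0 o1 o0) + Om (ix o1 o0 o0) (ix o1 o0 o0)
   + Om (ix o1 o1 o0) (ix o1 o1 o0) = c%:CC * c%:CC.
Proof. by have := Tconstr th o0 hL; rewrite /= tr_blk0. Qed.

Lemma hT1 : Om (ix o0 o0 o1) (ix o0 o0 o1) + Om (ix o0 o1 o1) (ix o0 o1 o1) + Om (ix o1 o0 o1) (ix o1 o0 o1)
   + Om (ix o1 o1 o1) (ix o1 o1 o1) = s%:CC * s%:CC.
Proof. by have := Tconstr th o1 hL; rewrite /= tr_blk1. Qed.

Lemma z1ge0 : 0 <= z1.
Proof. by rewrite /z1 z1E addr_ge0 // /sform; apply: (Om_psd th hL). Qed.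
Lemma z2ge0 : 0 <= z2.
Proof. by rewrite /z2 z2E addr_ge0 // /sform; apply: (Om_psd th hL). Qed.

Lemma z12E : z1 + z2 = Q [:: (c, ix o0 o0 o0); (s, ix o1 o0 o1)] + Q [:: (c, ix o0 o1 o0); (s, ix o1 o1 o1)]
   + (Q [:: (c, ix o0 o0 o0); (s, ix o0 o1 o1)] + Q [:: (c, ix o1 o0 o0); (s, ix o1 o1 o1)]).
Proof. by rewrite /z1 /z2 z1E z2E !uvecE !vvecE. Qed.

Lemma ub2 : z1 + z2 <= (3 * (c ^+ 4 + s ^+ 4))%:CC.
Proof.
have hid : 3%:CC * (c%:CC * c%:CC) * (Om (ix o0 o0 o0) (ix o0 o0 o0) + Om (ix o0 o1 o0) (ix o0 o1 o0) + Om (ix o1 o0 o0) (ix o1 o0 o0)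
   + Om (ix o1 o1 o0) (ix o1 o1 o0))
   + 3%:CC * (s%:CC * s%:CC) * (Om (ix o0 o0 o1) (ix o0 o0 o1) + Om (ix o0 o1 o1) (ix o0 o1 o1) + Om (ix o1 o0 o1) (ix o1 o0 o1)
   + Om (ix o1 o1 o1) (ix o1 o1 o1)) - (z1 + z2)
   = (s ^+ 2)%:CC * Q [:: (1, ix o0 o1 o1); (-1, ix o1 o0 o1)]
     + Q [:: (c, ix o0 o0 o0); (- s, ix o0 o1 o1); (- s, ix o1 o0 o1)]
     + (c ^+ 2)%:CC * Q [:: (1, ix o1 o0 o0); (-1, ix o0 o1 o0)]
     + Q [:: (c, ix o1 o0 o0); (c, ix o0 o1 o0); (- s, ix o1 o1 o1)]
     + (3 * s ^+ 2)%:CC * Q [:: (1, ix o0 o0 o1)]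
     + (3 * c ^+ 2)%:CC * Q [:: (1, ix o1 o1 o0)].
  Time rewrite z12E !sform_vecl.
  Time rewrite !big_cons !big_nil /=.
  Time ring.
rewrite hT0 hT1 in hid.
have h0 : 0 <= (s ^+ 2)%:CC * Q [:: (1, ix o0 o1 o1); (-1, ix o1 o0 o1)]
     + Q [:: (c, ix o0 o0 o0); (- s, ix o0 o1 o1); (- s, ix o1 o0 o1)]
     + (c ^+ 2)%:CC * Q [:: (1, ix o1 o0 o0); (-1, ix o0 o1 o0)]
     + Q [:: (c, ix o1 o0 o0); (c, ix o0 o1 o0); (- s, ix o1 o1 o1)]
     + (3 * s ^+ 2)%:CC * Q [:: (1, ix o0 o0 o1)]
     + (3 * c ^+ 2)%:CC * Q [:: (1, ix o1 o1 o0)].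
  by repeat (apply: addr_ge0 || apply: Qge0 || rewrite ler0c || apply: sqr_ge0 || apply: mulr_ge0 || done).
rewrite -hid subr_ge0 in h0.
apply: le_trans h0 _; rewrite le_eqVlt; apply/orP; left; apply/eqP; ring.
Qed.


Let r := Num.sqrt (2 : R).
Let al := c ^+ 2 + r * s ^+ 2.
Let ga := r * c ^+ 2 - s ^+ 2.
Let aa := 2 * c ^+ 2 + r * s ^+ 2.
Let bb := s ^+ 2 + r * c ^+ 2.

Lemma ub1 : 0 < c -> 0 <= al * ga - 2 * c ^+ 2 * s ^+ 2 ->
  z1 + z2 <= (2 * c ^+ 4 + 2 * r * c ^+ 2 * s ^+ 2 + s ^+ 4)%:CC.
Proof.
move=> hc hcond.
have hr0 : 0 <= r by apply: sqrtr_ge0.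
have hr2 : r ^+ 2 = 2 by apply: sqr_sqrtr; apply: ler0n.
have hc2 : 0 < c ^+ 2 by apply: exprn_gt0.
have hs2 := mulr_ge0 hr0 (sqr_ge0 s).
have hc2' := mulr_ge0 hr0 (sqr_ge0 c).
have hs0 := sqr_ge0 s.
have hal : 0 < al by rewrite /al; lra.
have hal0 : 0 <= al by apply: ltW.
have haa : 0 <= aa by rewrite /aa; lra.
have hbb : 0 <= bb by rewrite /bb; lra.
have hid : (2 * al)%:CC * (aa%:CC * (Om (ix o0 o0 o0) (ix o0 o0 o0) + Om (ix o0 o1 o0) (ix o0 o1 o0) + Om (ix o1 o0 o0) (ix o1 o0 o0)
   + Om (ix o1 o1 o0) (ix o1 o1 o0))
   + bb%:CC * (Om (ix o0 o0 o1) (ix o0 o0 o1) + Om (ix o0 o1 o1) (ix o0 o1 o1) + Om (ix o1 o0 o1) (ix o1 o0 o1)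
   + Om (ix o1 o1 o1) (ix o1 o1 o1)) - (z1 + z2))
   - ((al * r * c ^+ 2)%:CC * Q [:: (1, ix o0 o1 o1); (-1, ix o1 o0 o1)]
     + (al * r)%:CC * Q [:: (r * s, ix o0 o0 o0); (- c, ix o0 o1 o1); (- c, ix o1 o0 o1)]
     + (al ^+ 2)%:CC * Q [:: (1, ix o1 o0 o0); (-1, ix o0 o1 o0)]
     + Q [:: (al, ix o1 o0 o0); (al, ix o0 o1 o0); (- (2 * c * s), ix o1 o1 o1)]
     + (2 * (al * ga - 2 * c ^+ 2 * s ^+ 2))%:CC * Q [:: (1, ix o1 o1 o1)]
     + (2 * al * bb)%:CC * Q [:: (1, ix o0 o0 o1)]
     + (2 * al * aa)%:CC * Q [:: (1, ix o1 o1 o0)])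
   = (r ^+ 2 - 2)%:CC * (- Om (ix o0 o0 o0) (ix o0 o0 o0) * (r%:CC ^+ 2 * s%:CC ^+ 4 + c%:CC ^+ 2 * r%:CC * s%:CC ^+ 2)
      + (Om (ix o0 o0 o0) (ix o0 o1 o1) + Om (ix o0 o0 o0) (ix o1 o0 o1) + Om (ix o0 o1 o1) (ix o0 o0 o0)
         + Om (ix o1 o0 o1) (ix o0 o0 o0)) * (c%:CC * r%:CC * s%:CC ^+ 3 + c%:CC ^+ 3 * s%:CC)).
  rewrite z12E !sform_vecl !big_cons !big_nil /= /al /ga /aa /bb.
  Time ring.
rewrite hr2 subrr mul0r hT0 hT1 in hid; move/eqP: hid; rewrite subr_eq0 => /eqP hid.
have h0 : 0 <= (al * r * c ^+ 2)%:CC * Q [:: (1, ix o0 o1 o1); (-1, ix o1 o0 o1)]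
     + (al * r)%:CC * Q [:: (r * s, ix o0 o0 o0); (- c, ix o0 o1 o1); (- c, ix o1 o0 o1)]
     + (al ^+ 2)%:CC * Q [:: (1, ix o1 o0 o0); (-1, ix o0 o1 o0)]
     + Q [:: (al, ix o1 o0 o0); (al, ix o0 o1 o0); (- (2 * c * s), ix o1 o1 o1)]
     + (2 * (al * ga - 2 * c ^+ 2 * s ^+ 2))%:CC * Q [:: (1, ix o1 o1 o1)]
     + (2 * al * bb)%:CC * Q [:: (1, ix o0 o0 o1)]
     + (2 * al * aa)%:CC * Q [:: (1, ix o1 o1 o0)].
  by repeat (apply: hcond || apply: addr_ge0 || apply: Qge0 || rewrite ler0c || apply: sqr_ge0 || apply: mulr_ge0 || apply: ler0n || done).
have h2 : 0 < (2 * al)%:CC by rewrite ltcR mulr_gt0.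
rewrite -hid (pmulr_rge0 _ h2) subr_ge0 in h0.
apply: le_trans h0 _; rewrite le_eqVlt; apply/orP; left; apply/eqP.
rewrite /aa /bb; ring.
Qed.

End F.


Section G.
Variable R : realType.
Local Notation C := R[i].
Local Notation "x %:CC" := ((x : R)%:C)%C (at level 2, format "x %:CC").

Lemma sum2R (F : 'I_2 -> R) : \sum_(i < 2) F i = F o0 + F o1.
Proof. by rewrite big_ord_recr big_ord1 /=; congr (F _ + F _); apply: val_inj. Qed.

Variable th : R.
Local Notation c := (cos th).
Local Notation s := (sin th).
Definition pb (b : 'I_2) : R := if b == o0 then c else s.

Lemma psi_diag y b : psi_ket th (mxvec_index y b) 0 = ((y == b)%:R * pb b)%:CC.
Proof.
rewrite /pb; case: (I2_cases y) => ->; case: (I2_cases b) => ->;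
  rewrite ?psi00 ?psi01 ?psi10 ?psi11 /= ?mul1r ?mul0r //.
Qed.

Variable r : nat.
Variable kf : 'I_r -> 'I_2 -> 'I_2 -> 'I_2 -> R.
Definition Kmat (j : 'I_r) : 'M[C]_(2 * 2, 2) :=
  \matrix_(i, b) (kf j (idx_pair i).1 (idx_pair i).2 b)%:CC.

Lemma OmK a1 a2 b a1' a2' d :
  ext (kraus Kmat) (psi_state th) (ix a1 a2 b) (ix a1' a2' d)
  = (\sum_j kf j a1 a2 b * pb b * (kf j a1' a2' d * pb d))%:CC.
Proof.
rewrite /ext /ix mxE !idx_mxvec /= /kraus summxE rmorph_sum; apply: eq_bigr => j _.
rewrite !mxE !sum2 !adjmxE /blk !mxE !sum2 !mxE !big_ord1 !adjmxE !psi_diag !conjc_real !idx_mxvec /=.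
by case: (I2_cases b) => ->; case: (I2_cases d) => -> /=; ring.
Qed.


Lemma Kmat_TP : (forall b d, \sum_j \sum_(a1 < 2) \sum_(a2 < 2) kf j a1 a2 b * kf j a1 a2 d = (b == d)%:R) ->
  \sum_j adjmx (Kmat j) *m Kmat j = 1%:M.
Proof.
move=> H; apply/matrixP => b d; rewrite summxE [RHS]mxE.
transitivity ((\sum_j \sum_(a1 < 2) \sum_(a2 < 2) kf j a1 a2 b * kf j a1 a2 d)%:CC); last first.
  by rewrite H rmorph_nat.
rewrite !rmorph_sum; apply: eq_bigr => j _; rewrite mxE sum_pair.
rewrite rmorph_sum; apply: eq_bigr => a1 _; rewrite rmorph_sum; apply: eq_bigr => a2 _.
by rewrite adjmxE !mxE conjc_real idx_mxvec /= rmorphM.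
Qed.

End G.


Section H.
Variable R : realType.
Local Notation C := R[i].
Local Notation "x %:CC" := ((x : R)%:C)%C (at level 2, format "x %:CC").
Variable th : R.
Local Notation c := (cos th).
Local Notation s := (sin th).
Let r := Num.sqrt (2 : R).

Definition kf1 (j : 'I_1) (a1 a2 b : 'I_2) : R :=
  if b == o0 then ((a1 == o0) && (a2 == o0))%:R else (a1 != a2)%:R / r.

Lemma kf1_TP b d : \sum_j \sum_(a1 < 2) \sum_(a2 < 2) kf1 j a1 a2 b * kf1 j a1 a2 d = (b == d)%:R.
Proof.
have hr2 : r ^+ 2 = 2 by apply: sqr_sqrtr; apply: ler0n.
have hr0 : r != 0 by rewrite sqrtr_eq0 -ltNge ltr0n.
rewrite big_ord1 !sum2R /kf1.
case: (I2_cases b) => ->; case: (I2_cases d) => -> /=; try ring.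
have hq : r^-1 * r^-1 = 2^-1 by rewrite -invrM ?unitfE // -expr2 hr2.
rewrite !mul1r !mul0r; lra.
Qed.


Let L1 := kraus (Kmat kf1).

Lemma z1_ch1 : sform (psi_ket th) (keep1 (ext L1 (psi_state th))) (psi_ket th) = ((c ^+ 2 + s ^+ 2 / r) ^+ 2)%:CC.
Proof.
rewrite z1E !uvecE !sform_vecl !big_cons !big_nil /= !OmK !big_ord1 /kf1 /pb /=.
ring.
Qed.

Lemma z2_ch1 : sform (psi_ket th) (keep2 (ext L1 (psi_state th))) (psi_ket th) = ((c ^+ 2 + s ^+ 2 / r) ^+ 2)%:CC.
Proof.
rewrite z2E !vvecE !sform_vecl !big_cons !big_nil /= !OmK !big_ord1 /kf1 /pb /=.
ring.
Qed.

Lemma ch1 : channel L1.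
Proof. by apply: kraus_channel; apply: Kmat_TP; apply: kf1_TP. Qed.


Variables p q p' q' : R.
Definition kf2 (j : 'I_2) (a1 a2 b : 'I_2) : R :=
  if j == o0 then (if b == o0 then ((a1 == o0) && (a2 == o0))%:R * p else (a1 != a2)%:R * q)
  else (if b == o0 then (a1 != a2)%:R * p' else ((a1 == o1) && (a2 == o1))%:R * q').

Hypothesis h1 : p ^+ 2 + 2 * p' ^+ 2 = 1.
Hypothesis h2 : 2 * q ^+ 2 + q' ^+ 2 = 1.

Lemma kf2_TP b d : \sum_j \sum_(a1 < 2) \sum_(a2 < 2) kf2 j a1 a2 b * kf2 j a1 a2 d = (b == d)%:R.
Proof.
rewrite !sum2R /kf2.
case: (I2_cases b) => ->; case: (I2_cases d) => -> /=; try ring.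
  by transitivity (p ^+ 2 + 2 * p' ^+ 2); [ring | exact: h1].
by transitivity (2 * q ^+ 2 + q' ^+ 2); [ring | exact: h2].
Qed.

Let L2 := kraus (Kmat kf2).

Lemma ch2 : channel L2.
Proof. by apply: kraus_channel; apply: Kmat_TP; apply: kf2_TP. Qed.

Lemma z1_ch2 : sform (psi_ket th) (keep1 (ext L2 (psi_state th))) (psi_ket th)
  = ((p * c ^+ 2 + q * s ^+ 2) ^+ 2 + (p' * c ^+ 2 + q' * s ^+ 2) ^+ 2)%:CC.
Proof.
rewrite z1E !uvecE !sform_vecl !big_cons !big_nil /= !OmK !sum2R /kf2 /pb /=.
ring.
Qed.

Lemma z2_ch2 : sform (psi_ket th) (keep2 (ext L2 (psi_state th))) (psi_ket th)
  = ((p * c ^+ 2 + q * s ^+ 2) ^+ 2 + (p' * c ^+ 2 + q' * s ^+ 2) ^+ 2)%:CC.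
Proof.
rewrite z2E !vvecE !sform_vecl !big_cons !big_nil /= !OmK !sum2R /kf2 /pb /=.
ring.
Qed.

End H.


Section M.
Variable R : realType.
Local Notation C := R[i].

Lemma sup_eq_max (E : set R) x : E x -> (forall y, E y -> y <= x) -> sup E = x.
Proof.
move=> Ex ub; apply/le_anti/andP; split.
  by apply: ge_sup; [exists x | move=> y /ub].
by apply: (ub_le_sup (ex_intro _ x ub)).
Qed.

Lemma avg_le (a b f : R) : 0 <= a -> 0 <= b -> 0 <= f -> a + b <= 2 * f ^+ 2 ->
  (Num.sqrt a + Num.sqrt b) / 2 <= f.
Proof.
move=> a0 b0 f0 hab.
have pa := sqrtr_ge0 a; have pb := sqrtr_ge0 b.
have ea := sqr_sqrtr a0; have eb := sqr_sqrtr b0.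
set p := Num.sqrt a in pa ea *; set q := Num.sqrt b in pb eb *.
rewrite -ea -eb in hab.
have hpq := sqr_ge0 (p - q).
have : (p + q) ^+ 2 <= (2 * f) ^+ 2 by nra.
move=> h; have : p + q <= 2 * f.
  by rewrite -(ler_pXn2r (_ : (0 < 2)%N)) ?nnegrE ?addr_ge0 ?mulr_ge0.
lra.
Qed.

Lemma re_real (x : R) : complex.Re ((x%:C)%C : C) = x. Proof. by []. Qed.


Lemma fidz (th : R) (sig : 'M[C]_(2 * 2)) : 0 <= sform (psi_ket th) sig (psi_ket th) ->
  fidelity (psi_state th) sig = Num.sqrt (complex.Re (sform (psi_ket th) sig (psi_ket th))).
Proof. move=> h; exact: (fid_rank1 (psi_norm th) h). Qed.

Lemma Re_add_le (z1 z2 : C) (B : R) : 0 <= z1 -> 0 <= z2 -> z1 + z2 <= (B%:C)%C ->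
  complex.Re z1 + complex.Re z2 <= B.
Proof.
move=> h1 h2; have [e1 _] := ge0_re h1; have [e2 _] := ge0_re h2.
by rewrite {1}e1 {1}e2 -rmorphD lecR.
Qed.

End M.

Theorem theorem4 (R : realType) (th : R) :
  0 < th -> th <= pi / 4 ->
  f2 (psi_state th) =
    (if th <= atan (powR 2 (- 4^-1))
     then cos th ^+ 2 + sin th ^+ 2 / Num.sqrt 2
     else Num.sqrt (3 / 2 * (cos th ^+ 4 + sin th ^+ 4))).
Proof.
move=> h0 h4.
have hpi : 0 < pi :> R := pi_gt0 R.
have hc : 0 < cos th by apply: cos_gt0_pihalf; apply/andP; split; lra.
have hs : 0 < sin th by apply: sin_gt0_pihalf; apply/andP; split; lra.
have hcs : cos th ^+ 2 + sin th ^+ 2 = 1 := cos2Dsin2 th.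
have thI : th \in `](- (pi / 2)), (pi / 2)[ by rewrite in_itv /=; apply/andP; split; lra.
have p4I : (pi / 4 : R) \in `](- (pi / 2)), (pi / 2)[ by rewrite in_itv /=; apply/andP; split; lra.
set q := powR 2 (- 4^-1) : R.
have qI : atan q \in `](- (pi / 2)), (pi / 2)[ by rewrite in_itv /= atan_gtNpi2 atan_ltpi2.
have hq0 : 0 < q by apply: powR_gt0.
have hq4 : q ^+ 4 = 2^-1.
  rewrite /q -powR_mulrn ?powR_ge0 // -powRrM.
  have -> : - 4^-1 * 4%:R = -1 :> R by rewrite mulNr mulVf ?pnatr_eq0.
  by rewrite powR_inv1 ?ler0n.
have t1 : sin th / cos th <= 1.
  have := h4; rewrite leNgt -(ltr_tan p4I thI) tan_piquarter -leNgt; exact.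
rewrite ler_pdivrMr // mul1r in t1.
have UB : forall f : R, 0 <= f ->
  (forall L, channel L -> sform (psi_ket th) (keep1 (ext L (psi_state th))) (psi_ket th)
     + sform (psi_ket th) (keep2 (ext L (psi_state th))) (psi_ket th) <= ((2 * f ^+ 2)%:C)%C) ->
  forall y, [set x : R | exists L : 'M[R[i]]_2 -> 'M[R[i]]_(2 * 2),
         channel L /\
         x = (fidelity (psi_state th) (keep1 (ext L (psi_state th)))
              + fidelity (psi_state th) (keep2 (ext L (psi_state th)))) / 2]%classic y -> y <= f.
  move=> f f0 hB y [L [hL ->]].
  have hz1 := z1ge0 th hL; have hz2 := z2ge0 th hL.
  rewrite !fidz //; apply: avg_le => //.
  - by case: (ge0_re hz1).
  - by case: (ge0_re hz2).
  exact: Re_add_le hz1 hz2 (hB L hL).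
have hr0 : 0 <= Num.sqrt 2 :> R by apply: sqrtr_ge0.
have hr2 : Num.sqrt 2 ^+ 2 = 2 :> R by apply: sqr_sqrtr; apply: ler0n.
have hrn0 : Num.sqrt 2 != 0 :> R by rewrite sqrtr_eq0 -ltNge ltr0n.
have hcn0 : cos th != 0 by rewrite gt_eqF.
have hsn0 : sin th != 0 by rewrite gt_eqF.
case: ifP => hth.
-
  have t2 : sin th <= q * cos th.
    have : sin th / cos th <= q.
      by move: hth; rewrite leNgt -(ltr_tan qI thI) atanK -leNgt.
    by rewrite ler_pdivrMr.
  have t4 : sin th ^+ 4 <= (q * cos th) ^+ 4.
    by rewrite ler_pXn2r // nnegrE ?mulr_ge0 // ltW.
  rewrite exprMn hq4 in t4.
  set r := Num.sqrt 2 : R in hr0 hr2 hrn0 *.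
  set K := cos th ^+ 2. set S := sin th ^+ 2.
  have K0 : 0 < K by apply: exprn_gt0.
  have S0 : 0 <= S by apply: sqr_ge0.
  have hKS : 2 * S ^+ 2 <= K ^+ 2.
    by rewrite /S /K -!exprM; move: t4; rewrite -/(4%N) ; nra.
  have hd : r * S <= K.
    have : (r * S) ^+ 2 <= K ^+ 2 by rewrite exprMn hr2.
    by rewrite ler_pXn2r // nnegrE ?mulr_ge0 // ltW.
  have hcond : 0 <= (K + r * S) * (r * K - S) - 2 * K * S.
    have -> : (K + r * S) * (r * K - S) - 2 * K * S
      = 3 * S * (K - r * S) + r * (K - r * S) ^+ 2 + (r ^+ 2 - 2) * (3 * S * K - r * S ^+ 2) by ring.
    rewrite hr2 subrr mul0r addr0.
    have hd2 : 0 <= K - r * S by rewrite subr_ge0.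
    have := mulr_ge0 (mulr_ge0 (ler0n R 3) S0) hd2; have := mulr_ge0 hr0 (sqr_ge0 (K - r * S)); lra.
  have f0 : 0 <= K + S / r by apply: addr_ge0; [apply: ltW | apply: divr_ge0].
  rewrite /f2; apply: sup_eq_max.
    exists (kraus (Kmat (kf1 R))); split; first exact: ch1.
    rewrite !fidz ?z1_ch1 ?z2_ch1 ?ler0c ?sqr_ge0 // re_real sqrtr_sqr ger0_norm //.
    by rewrite /K /S /r; field.
  apply: UB => // L hL.
  have hub := ub1 hL hc; rewrite -/K -/S -/r in hub.
  have := hub hcond.
  have hri : r^-1 = r / 2.
    apply: (mulfI hrn0); rewrite mulfV // mulrA -expr2 hr2 mulfV //.
  have -> : (2 * cos th ^+ 4 + 2 * r * K * S + sin th ^+ 4) = 2 * (K + S / r) ^+ 2.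
    have e4c : cos th ^+ 4 = K ^+ 2 by rewrite /K -exprM.
    have e4s : sin th ^+ 4 = S ^+ 2 by rewrite /S -exprM.
    rewrite e4c e4s hri.
    transitivity (2 * K ^+ 2 + 2 * r * K * S + S ^+ 2 * (r ^+ 2 / 2)); last by field.
    by rewrite hr2 divff ?mulr1 // pnatr_eq0.
  by [].
-
  have t2 : q * cos th < sin th.
    have : q < sin th / cos th.
      by move: hth; rewrite leNgt -(ltr_tan qI thI) atanK => /negbFE.
    by rewrite ltr_pdivlMr.
  have t4 : (q * cos th) ^+ 4 < sin th ^+ 4.
    by rewrite ltr_pXn2r // nnegrE ?mulr_ge0 // ltW.
  rewrite exprMn hq4 in t4.
  have t5 : sin th ^+ 4 <= cos th ^+ 4.
    by rewrite ler_pXn2r // nnegrE ltW.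
  have c4 : 0 <= cos th ^+ 4 by rewrite exprn_ge0 // ltW.
  have den : 0 < 6 * cos th ^+ 2 * sin th ^+ 2 by rewrite !mulr_gt0 ?exprn_gt0.
  set X := (2 * cos th ^+ 4 - sin th ^+ 4) / (6 * cos th ^+ 2 * sin th ^+ 2).
  set Y := (2 * sin th ^+ 4 - cos th ^+ 4) / (6 * cos th ^+ 2 * sin th ^+ 2).
  have X0 : 0 <= X by rewrite /X divr_ge0 ?ltW //; lra.
  have Y0 : 0 <= Y by rewrite /Y divr_ge0 ?ltW //; lra.
  set x := Num.sqrt X; set y := Num.sqrt Y.
  have hx : x ^+ 2 = X by apply: sqr_sqrtr.
  have hy : y ^+ 2 = Y by apply: sqr_sqrtr.
  set pp := 2 * sin th * x / cos th; set qq := cos th * x / sin th.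
  set pp' := sin th * y / cos th; set qq' := 2 * cos th * y / sin th.
  have h1 : pp ^+ 2 + 2 * pp' ^+ 2 = 1.
    have -> : pp ^+ 2 + 2 * pp' ^+ 2 = (4 * sin th ^+ 2 * x ^+ 2 + 2 * sin th ^+ 2 * y ^+ 2) / cos th ^+ 2.
      by rewrite /pp /pp'; field; rewrite ?hcn0 ?hsn0.
    by rewrite hx hy /X /Y; field; rewrite ?hcn0 ?hsn0.
  have h2 : 2 * qq ^+ 2 + qq' ^+ 2 = 1.
    have -> : 2 * qq ^+ 2 + qq' ^+ 2 = (2 * cos th ^+ 2 * x ^+ 2 + 4 * cos th ^+ 2 * y ^+ 2) / sin th ^+ 2.
      by rewrite /qq /qq'; field; rewrite ?hcn0 ?hsn0.
    by rewrite hx hy /X /Y; field; rewrite ?hcn0 ?hsn0.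
  set F := 3 / 2 * (cos th ^+ 4 + sin th ^+ 4).
  have hval : (pp * cos th ^+ 2 + qq * sin th ^+ 2) ^+ 2 + (pp' * cos th ^+ 2 + qq' * sin th ^+ 2) ^+ 2 = F.
    have -> : (pp * cos th ^+ 2 + qq * sin th ^+ 2) ^+ 2 + (pp' * cos th ^+ 2 + qq' * sin th ^+ 2) ^+ 2
       = 9 * cos th ^+ 2 * sin th ^+ 2 * (x ^+ 2 + y ^+ 2).
      by rewrite /pp /qq /pp' /qq'; field; rewrite ?hcn0 ?hsn0.
    by rewrite hx hy /X /Y /F; field; rewrite ?hcn0 ?hsn0.
  have F0 : 0 <= F by rewrite /F mulr_ge0 ?addr_ge0 ?exprn_ge0 // ltW.
  rewrite /f2; apply: sup_eq_max.
    exists (kraus (Kmat (kf2 pp qq pp' qq'))); split; first exact: ch2.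
    rewrite !fidz ?z1_ch2 ?z2_ch2 ?ler0c ?addr_ge0 ?sqr_ge0 // re_real hval.
    by field; rewrite ?hcn0 ?hsn0.
  apply: UB; first exact: sqrtr_ge0.
  move=> L hL; have := ub2 th hL.
  by rewrite sqr_sqrtr // /F; congr (_ <= (_%:C)%C); field; rewrite ?hcn0 ?hsn0.
Qed.
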